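(* Fix $C\neq1$ and fix $\epsilon\in(0,1)$, $\omega>0$ such that $\delta_0=\delta(C)-C\epsilon-\omega>0$. Fix $M>\frac1{\delta_0}$ and $\theta<M\delta_0-1$. There is a positive constant $N$ such that \[ \mathbb{P}\Big(\bigcup_{1\le i\le n}\{M\log n+1\le\#\mathcal{E}_i\le\epsilon n\}\Big)\le\frac1{n^\theta} \] for all $n\ge N$.
   Context: Let $C>0$ be a constant and $(\alpha_n)_{n\ge1}$ a sequence of nonnegative reals with $\alpha_n\to0$. For each $n$, consider the complete graph $K_n$ on vertex set $\{1,\dots,n\}$; each edge $e$ of $K_n$ is independently open with probability $p_n(e)$ and closed otherwise, where $\frac{C-\alpha_n}{n}\le p_n(e)\le\frac{C+\alpha_n}{n}$ for every edge $e$. Let $G$ be the resulting random graph of open edges, with probability measure $\mathbb{P}$. For a vertex $i$, $\mathcal{E}_i$ denotes the open component of $G$ containing $i$ (the set of vertices joined to $i$ by a path of open edges, together with $i$ itself), and $\#\mathcal{E}_i$ its number of vertices. $\delta(C)=C-1-\log C$. $\log$ is the natural logarithm. *)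

(* Defs.v *)
From HB Require Import structures.
From mathcomp Require Import all_boot all_order all_algebra.
From mathcomp Require Import all_classical all_reals all_analysis.
Set Implicit Arguments. Unset Strict Implicit. Unset Printing Implicit Defensive.
Import Order.TTheory GRing.Theory Num.Theory.
Local Open Scope ring_scope.

(* Edges of the complete graph K_n on vertex set 'I_n (vertices 0..n-1),
   each unordered pair {i,j} represented once as (i,j) with i < j. *)
Definition edge (n : nat) := {e : 'I_n * 'I_n | (e.1 < e.2)%N}.

Definition config (n : nat) := {ffun edge n -> bool}.

Definition conf_prob (R : realType) (n : nat) (p : edge n -> R) (w : config n) : R :=
  \prod_(e : edge n) (if w e then p e else 1 - p e).

Definition Prob (R : realType) (n : nat) (p : edge n -> R) (A : pred (config n)) : R :=
  \sum_(w : config n | A w) conf_prob p w.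

Definition adj (n : nat) (w : config n) : rel 'I_n := fun i j =>
  [exists e : edge n, w e &&
     ((((val e).1 == i) && ((val e).2 == j)) || (((val e).1 == j) && ((val e).2 == i)))].

Definition comp (n : nat) (w : config n) (i : 'I_n) : {set 'I_n} :=
  [set j | connect (adj w) i j].
Definition comp_size (n : nat) (w : config n) (i : 'I_n) : nat := #|comp w i|.

Definition delta (R : realType) (C : R) : R := C - 1 - ln C.

(* Main.v *)
Require Import Defs.
From HB Require Import structures.
From mathcomp Require Import all_boot all_order all_algebra.
From mathcomp Require Import all_classical all_reals all_analysis.
From mathcomp Require Import ring lra.
Import Order.TTheory GRing.Theory Num.Theory.
Import numFieldNormedType.Exports.
Local Open Scope ring_scope.
Set Implicit Arguments. Unset Strict Implicit. Unset Printing Implicit Defensive.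

Section Comb.
Variables (R : realType) (n : nat) (p : edge n -> R).

Lemma conf_prob_ge0 (hp : forall e, 0 <= p e <= 1) w : 0 <= conf_prob p w.
Proof.
rewrite /conf_prob; apply: prodr_ge0 => e _.
have /andP[h0 h1] := hp e; case: (w e) => //; by rewrite subr_ge0.
Qed.

Lemma prob_cyl (T B : {set edge n}) :
  [disjoint T & B] ->
  Prob p (fun w => [forall e in T, w e] && [forall e in B, ~~ w e]) =
  \prod_(e in T) p e * \prod_(e in B) (1 - p e).
Proof.
move=> dTB.
pose g e (b : bool) := if e \in T then (if b then p e else 0)
  else if e \in B then (if b then 0 else 1 - p e) else (if b then p e else 1 - p e).
have -> : Prob p (fun w => [forall e in T, w e] && [forall e in B, ~~ w e]) =
   \sum_(w : config n) \prod_(e : edge n) g e (w e).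
  rewrite /Prob /conf_prob big_mkcond /=; apply: eq_bigr => w _.
  case: ifP => Hc.
    case/andP: Hc => /forallP H1 /forallP H2.
    apply: eq_bigr => e _; rewrite /g.
    case: (boolP (e \in T)) => eT; first by move: (H1 e); rewrite eT /= => ->.
    case: (boolP (e \in B)) => eB //; by move: (H2 e); rewrite eB /= => /negbTE ->.
  move/negbT: Hc; rewrite negb_and => /orP[/forallPn [e] | /forallPn [e]].
    rewrite negb_imply => /andP[eT nwe]. idtac.
    by rewrite (bigD1 e) //= /g eT (negbTE nwe) mul0r.
  rewrite negb_imply negbK => /andP[eB we].
  have eT : e \notin T.
    apply/negP => eT; move: dTB => /disjointFr; by move=> /(_ e eT); rewrite eB.
  by rewrite (bigD1 e) //= /g (negbTE eT) eB we mul0r.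
rewrite -(bigA_distr_bigA (fun e b => g e b)) /=.
under eq_bigr => e _ do rewrite big_bool /g.
rewrite (bigID (mem T)) /=; congr (_ * _).
  by apply: eq_bigr => e ->; rewrite addr0.
rewrite [RHS]big_mkcond [LHS]big_mkcond /=; apply: eq_bigr => e _.
case: (boolP (e \in T)) => eT /=.
  have eB : e \notin B.
    apply/negP => eB; move: dTB => /disjointFr; by move=> /(_ e eT); rewrite eB.
  by rewrite (negbTE eB).
case: ifP => eB; first by rewrite add0r.
by rewrite addrC subrK.
Qed.

Lemma prob_union (I : finType) (P : pred I) (E : I -> pred (config n))
  (A : pred (config n)) :
  (forall e, 0 <= p e <= 1) ->
  (forall w, A w -> exists2 x, P x & E x w) ->
  Prob p A <= \sum_(x | P x) Prob p (E x).
Proof.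
move=> hp hA.
rewrite /Prob.
have -> : \sum_(x | P x) \sum_(w | E x w) conf_prob p w =
  \sum_(x | P x) \sum_w (if E x w then conf_prob p w else 0).
  by apply: eq_bigr => x _; rewrite big_mkcond.
rewrite exchange_big /= big_mkcond /=.
apply: ler_sum => w _.
case: ifP => Aw; last first.
  by apply: sumr_ge0 => x _; case: ifP => // _; apply: conf_prob_ge0.
have [x Px Exw] := hA w Aw.
rewrite (bigD1 x) //= Exw lerDl.
by apply: sumr_ge0 => y _; case: ifP => // _; apply: conf_prob_ge0.
Qed.
End Comb.

Definition joins n (e : edge n) (a b : 'I_n) :=
  (((val e).1 == a) && ((val e).2 == b)) || (((val e).1 == b) && ((val e).2 == a)).

Definition Tset n (S : {set 'I_n}) (f : {ffun 'I_n -> 'I_n}) : {set edge n} :=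
  [set e : edge n | [exists j in S, (f j != j) && joins e j (f j)]].

Definition bnd n (S : {set 'I_n}) : {set edge n} :=
  [set e : edge n | ((val e).1 \in S) != ((val e).2 \in S)].

Lemma joins_uniq n (e e' : edge n) a b : joins e a b -> joins e' a b -> e = e'.
Proof.
move=> h h'; apply: val_inj; move: h h'; rewrite /joins.
case: e => [[x y] /= hxy]; case: e' => [[x' y'] /= hxy'].
case/orP=> /andP[/eqP ? /eqP ?]; case/orP=> /andP[/eqP ? /eqP ?]; subst => //;
  by move: (ltn_trans hxy hxy'); rewrite ltnn.
Qed.

Lemma exists_edge n (a b : 'I_n) : a != b -> exists e : edge n, joins e a b.
Proof.
move=> nab; case: (ltngtP a b) => h.
- by exists (exist _ (a, b) h); rewrite /joins /= !eqxx.
- by exists (exist _ (b, a) h); rewrite /joins /= !eqxx orbT.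
- by move: nab; rewrite (val_inj h) eqxx.
Qed.

Lemma adj_sym n (w : config n) a b : adj w a b = adj w b a.
Proof.
rewrite /adj; apply/existsP/existsP => -[e /andP[we he]]; exists e;
  by rewrite we /= orbC.
Qed.

Lemma adjP n (w : config n) a b : reflect (exists2 e, w e & joins e a b) (adj w a b).
Proof.
apply: (iffP existsP) => [[e /andP[we he]]|[e we he]]; exists e => //; exact/andP.
Qed.

Section Tree.
Variables (n : nat) (w : config n) (i : 'I_n).
Let S := Defs.comp w i.

Lemma comp_adj a b : a \in S -> adj w a b -> b \in S.
Proof.
rewrite /S /Defs.comp !inE => ha hab; apply: connect_trans ha _; exact: connect1.
Qed.

Fixpoint ball m : {set 'I_n} :=
  if m is m'.+1 then [set v | [exists u in ball m', (u == v) || adj w u v]]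
  else [set i].

Lemma ball_comp m v : v \in ball m -> v \in S.
Proof.
elim: m v => [|m IH] v /=; first by rewrite inE => /eqP ->; rewrite /S /Defs.comp inE connect0.
rewrite inE => /existsP[u /andP[hu /orP[/eqP <-|hadj]]]; first exact: IH.
exact: comp_adj (IH _ hu) hadj.
Qed.

Lemma comp_ball v : v \in S -> exists m, v \in ball m.
Proof.
rewrite /S /Defs.comp inE => /connectP[s hs ->]; move: hs.
elim/last_ind: s => [|s x IH]; first by exists 0%N; rewrite /= inE.
rewrite rcons_path last_rcons => /andP[hs hx].
have [m hm] := IH hs; exists m.+1; rewrite /= inE; apply/existsP; exists (last i s).
by rewrite hm hx orbT.
Qed.

Definition pot v : nat :=
  match pselect (exists m, v \in ball m) with
  | left h => ex_minn h
  | right _ => 0%N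
  end.

Lemma potP v m : v \in ball m -> v \in ball (pot v) /\ (forall m', v \in ball m' -> (pot v <= m')%N).
Proof.
move=> hv; rewrite /pot; case: pselect => [h|nh]; last by exfalso; apply: nh; exists m.
by case: ex_minnP.
Qed.

Lemma pot_step v : v \in S -> v != i -> exists u, adj w v u && (pot u < pot v)%N.
Proof.
move=> vS vi; have [m hm] := comp_ball vS.
have [hb hmin] := potP hm.
move: hb hmin; case E: (pot v) => [|d].
  by rewrite /= inE (negbTE vi).
rewrite /= inE => /existsP[u /andP[hu /orP[/eqP uv|hadj]]] hmin.
  by subst u; have := hmin d hu; rewrite ltnn.
exists u; rewrite adj_sym hadj /=.
by have [_ h] := potP hu; exact: h d hu.
Qed.

Definition fpar : {ffun 'I_n -> 'I_n} :=
  [ffun j => if (j \in S) && (j != i) then odflt j [pick u | adj w j u && (pot u < pot j)%N] else j].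

Lemma fparP j : j \in S -> j != i -> adj w j (fpar j) && (pot (fpar j) < pot j)%N.
Proof.
move=> jS ji; rewrite /fpar ffunE jS ji /=.
case: pickP => [u hu //|hn].
have [u hu] := pot_step jS ji; by rewrite hn in hu.
Qed.

Lemma tree_exists :
  [forall j, if j \in S then fpar j \in S else fpar j == j] /\
  (#|S| - 1 <= #|Tset S fpar|)%N /\
  (forall e, e \in Tset S fpar -> w e) /\
  (forall e, e \in bnd S -> ~~ w e).
Proof.
split.
  apply/forallP => j; case: ifP => jS; last by rewrite /fpar ffunE jS.
  case: (eqVneq j i) => [eji|ji]; first by rewrite /fpar ffunE eji eqxx andbF -eji.
  by have /andP[ha _] := fparP jS ji; exact: comp_adj jS ha.
split.
  pose g (e : edge n) := if (pot (val e).1 < pot (val e).2)%N then (val e).2 else (val e).1.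
  have iS : i \in S by rewrite /S /Defs.comp inE connect0.
  have -> : (#|S| - 1 = #|S :\ i|)%N by rewrite (cardsD1 i S) iS add1n subn1.
  apply: (leq_trans _ (leq_imset_card g _)).
  apply: subset_leq_card. apply/fintype.subsetP => j; rewrite in_setD1 => /andP[ji jS].
  have /andP[ha hp] := fparP jS ji.
  case/adjP: ha => e we he.
  apply/imsetP; exists e.
    rewrite inE; apply/existsP; exists j; rewrite jS he andbT /=.
    by apply/eqP => h; move: hp; rewrite h ltnn.
  rewrite /g; move: he; rewrite /joins => /orP[/andP[/eqP -> /eqP ->]|/andP[/eqP -> /eqP ->]].
    by rewrite ltnNge (ltnW hp).
  by rewrite hp.
split.
  move=> e; rewrite inE => /existsP[j /andP[jS /andP[fj he]]].
  have ji : j != i by apply: contraNneq fj => ->; rewrite /fpar ffunE eqxx andbF.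
  have /andP[ha _] := fparP jS ji.
  case/adjP: ha => e' we' he'.
  by rewrite (joins_uniq he he').
move=> e; rewrite inE => hb; apply/negP => we.
have h12 : ((val e).1 \in S) = ((val e).2 \in S).
  apply/idP/idP => h; [apply: comp_adj h _ | apply: comp_adj h _];
    apply/adjP; exists e => //; by rewrite /joins !eqxx ?orbT.
by rewrite h12 eqxx in hb.
Qed.
End Tree.

Definition fam n (S : {set 'I_n}) (f : {ffun 'I_n -> 'I_n}) :=
  [forall j, if j \in S then f j \in S else f j == j].

Lemma bnd_card n (S : {set 'I_n}) : (#|S| * (n - #|S|) <= #|bnd S|)%N.
Proof.
pose g (e : edge n) := if (val e).1 \in S then ((val e).1, (val e).2) else ((val e).2, (val e).1).
have -> : (#|S| * (n - #|S|) = #|finset.setX S (~: S)|)%N.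
  rewrite cardsX; congr (_ * _)%N; have := cardsC S; rewrite card_ord.
  move: #|S| #|~: S| => a b hc; by rewrite -hc addKn.
apply: (leq_trans _ (leq_imset_card g _)).
apply: subset_leq_card; apply/fintype.subsetP => -[a b]; rewrite inE /= inE => /andP[aS bS].
have ab : a != b by apply: contraNneq bS => <-.
have [e he] := exists_edge ab.
apply/imsetP; exists e.
  rewrite inE; move: he; rewrite /joins => /orP[/andP[/eqP -> /eqP ->]|/andP[/eqP -> /eqP ->]].
    by rewrite aS (negbTE bS).
  by rewrite aS (negbTE bS).
rewrite /g; move: he; rewrite /joins => /orP[/andP[/eqP -> /eqP ->]|/andP[/eqP -> /eqP ->]].
  by rewrite aS.
by rewrite (negbTE bS).
Qed.

Lemma prob_E (R : realType) n (p : edge n -> R) (q pm : R) S f :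
  (forall e, 0 <= p e <= 1) -> (forall e, pm <= p e <= q) -> 0 <= pm -> 0 <= q -> q <= 1 ->
  fam S f -> (#|S| - 1 <= #|Tset S f|)%N ->
  Prob p (fun w => [forall e in Tset S f, w e] && [forall e in bnd S, ~~ w e])
  <= q ^+ (#|S| - 1) * expR (- pm) ^+ (#|S| * (n - #|S|)).
Proof.
move=> hp hq pm0 q0 q1 hf hT.
have dis : [disjoint Tset S f & bnd S].
  rewrite disjoint_subset; apply/fintype.subsetP => e; rewrite inE => /existsP[j /andP[jS /andP[_ he]]].
  rewrite !inE negbK.
  have fjS : f j \in S by move/forallP: hf => /(_ j); rewrite jS.
  move: he; rewrite /joins => /orP[/andP[/eqP -> /eqP ->]|/andP[/eqP -> /eqP ->]];
    by rewrite jS fjS.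
rewrite prob_cyl //.
apply: ler_pM.
- by apply: prodr_ge0 => e _; have /andP[] := hp e.
- by apply: prodr_ge0 => e _; have /andP[_ h] := hp e; rewrite subr_ge0.
- apply: (@le_trans _ _ (\prod_(e in Tset S f) q)).
    by apply: ler_prod => e _; have /andP[h0 _] := hp e; have /andP[_ h] := hq e; rewrite h0 h.
  by rewrite prodr_const; apply: ler_wiXn2l.
- apply: (@le_trans _ _ (\prod_(e in bnd S) expR (- pm))).
    apply: ler_prod => e _; have /andP[_ h] := hp e; rewrite subr_ge0 h /=.
    apply: (le_trans (expR_ge1Dx _)); rewrite ler_expR lerN2.
    by have /andP[] := hq e.
  rewrite prodr_const; apply: ler_wiXn2l; first exact: expR_ge0.
    by rewrite -expR0 ler_expR oppr_le0.
  exact: bnd_card.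
Qed.

Lemma card_fam n (S : {set 'I_n}) :
  #|[pred f : {ffun 'I_n -> 'I_n} | fam S f]| = (#|S| ^ #|S|)%N.
Proof.
pose F := fun j : 'I_n => [pred u : 'I_n | if j \in S then u \in S else u == j].
have -> : #|[pred f : {ffun 'I_n -> 'I_n} | fam S f]| = #|family F|.
  by apply: eq_card => f.
rewrite card_family foldrE big_map big_enum /=.
rewrite (eq_bigr (fun j => if j \in S then #|S| else 1%N)); last first.
  move=> j _; case: ifP => jS.
    by apply: eq_card => u.
  by rewrite -(card1 j); apply: eq_card.
by rewrite -big_mkcond prod_nat_const.
Qed.

Lemma sum_by_card (R : realType) n (c : nat -> bool) (G : nat -> R) :
  \sum_(S : {set 'I_n} | c #|S|) G #|S| = \sum_(k < n.+1 | c k) 'C(n, k)%:R * G k.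
Proof.
have hS : forall S : {set 'I_n}, (#|S| < n.+1)%N.
  by move=> S; have := max_card S; rewrite card_ord.
rewrite (partition_big (fun S => Ordinal (hS S)) (fun k : 'I_n.+1 => c k)) //=.
apply: eq_bigr => k ck.
rewrite (eq_bigl (fun S : {set 'I_n} => #|S| == k :> nat)); last first.
  move=> S /=; apply/andP/eqP => [[_ /eqP <-] // | h].
  by split; [rewrite h | apply/eqP; apply: val_inj].
rewrite (eq_bigr (fun _ => G k)); last by move=> S /eqP ->.
have := card_draws 'I_n k; rewrite card_ord => <-.
rewrite (eq_bigl (mem [set A : {set 'I_n} | #|A| == k])); last by move=> S; rewrite /= !inE.
by rewrite sumr_const mulr_natl.
Qed.

Lemma count_bound (R : realType) n (c : nat -> bool)
   (Q : pred ({set 'I_n} * {ffun 'I_n -> 'I_n})) (F : nat -> R) :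
  (forall k, 0 <= F k) ->
  \sum_(x : {set 'I_n} * {ffun 'I_n -> 'I_n} | c #|x.1| && fam x.1 x.2 && Q x) F #|x.1|
    <= \sum_(k < n.+1 | c k) ('C(n, k) * k ^ k)%:R * F k.
Proof.
move=> F0.
apply: (@le_trans _ _ (\sum_(x : {set 'I_n} * {ffun 'I_n -> 'I_n} | c #|x.1| && fam x.1 x.2) F #|x.1|)).
  rewrite [X in X <= _]big_mkcond [X in _ <= X]big_mkcond /=.
  apply: ler_sum => x _; case: ifP => [/andP[-> _] //|_].
  by case: ifP.
rewrite -(pair_big_dep (fun S : {set 'I_n} => c #|S|) (fun S f => fam S f) (fun S (f : {ffun 'I_n -> 'I_n}) => F #|S|)) /=.
rewrite (eq_bigr (fun S : {set 'I_n} => ((#|S| ^ #|S|)%N)%:R * F #|S|)); last first.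
  move=> S _; rewrite sumr_const -card_fam mulr_natl.
  by [].
rewrite (@sum_by_card R n c (fun k => ((k ^ k)%N)%:R * F k)).
by apply: ler_sum => k _; rewrite natrM mulrA.
Qed.

Lemma real_ineq (R : realType) (C a eps omega L kR nR : R) :
  0 < C -> 0 <= a -> a <= C -> a / C + a <= omega -> 0 < eps < 1 ->
  1 <= kR -> kR <= nR -> kR <= eps * nR ->
  ln C <= L -> L <= ln C + a / C ->
  kR + (kR - 1) * L - (C - a) / nR * (kR * (nR - kR))
  <= - ln C - (C - 1 - ln C - C * eps - omega) * kR.
Proof.
move=> C0 a0 aC haw /andP[e0 e1] k1 kn kle hL1 hL2.
have nR0 : 0 < nR by lra.
set Y := (C - a) / nR * (nR - kR).
have -> : (C - a) / nR * (kR * (nR - kR)) = kR * Y by rewrite /Y; ring.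
have hY : (C - a) * (1 - eps) <= Y.
  rewrite /Y -mulrA; apply: ler_wpM2l; first lra.
  rewrite mulrBr mulVf ?gt_eqF //.
  have : kR / nR <= eps by rewrite ler_pdivrMr //.
  rewrite mulrC; lra.
have h1 : kR * L <= kR * (ln C + a / C) by apply: ler_wpM2l; lra.
have h2 : kR * ((C - a) * (1 - eps)) <= kR * Y by apply: ler_wpM2l; lra.
have h3 : kR * (a / C + a - a * eps) <= kR * omega.
  apply: ler_wpM2l; first lra.
  have : 0 <= a * eps by apply: mulr_ge0; lra.
  lra.
lra.
Qed.

Lemma term_bound (R : realType) (C a eps omega : R) (n k : nat) :
  0 < C -> 0 <= a -> a <= C -> a / C + a <= omega -> 0 < eps < 1 ->
  (1 <= k)%N -> (k <= n)%N -> k%:R <= eps * n%:R ->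
  (('C(n, k) * k ^ k)%N)%:R *
    (((C + a) / n%:R) ^+ (k - 1) * expR (- ((C - a) / n%:R)) ^+ (k * (n - k)))
  <= n%:R / C * expR (- ((C - 1 - ln C - C * eps - omega) * k%:R)).
Proof.
move=> C0 a0 aC haw he k1 kn kle.
have n0 : (0 < n)%N by apply: leq_trans kn.
have nR : 0 < n%:R :> R by rewrite ltr0n.
have Ca0 : 0 < C + a by lra.
set L := ln (C + a).
have hk : (k ^ k)%:R <= (k`!)%:R * expR (k%:R) :> R.
  have := @expR_ge1Dxn R k%:R k.-1 (ler0n _ _); rewrite prednK // => h.
  have f0 : 0 < k`!%:R :> R by rewrite ltr0n fact_gt0.
  rewrite natrX -ler_pdivrMl // mulrC; apply: le_trans h; by rewrite lerDr.
have hff : (n ^_ k <= n ^ k)%N.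
  have -> : (n ^ k = \prod_(i < k) n)%N by rewrite prod_nat_const card_ord.
  rewrite ffact_prod; apply: leq_prod => i _; exact: leq_subr.
have h1 : (('C(n, k) * k ^ k)%N)%:R <= n%:R ^+ k * expR k%:R :> R.
  rewrite natrM; apply: (le_trans (ler_wpM2l (ler0n _ _) hk)).
  rewrite mulrA -natrM bin_ffact -natrX; apply: ler_wpM2r; first exact: expR_ge0.
  by rewrite ler_nat.
apply: (le_trans (ler_wpM2r _ h1)).
  apply: mulr_ge0; apply: exprn_ge0; last exact: expR_ge0.
  by apply: divr_ge0; [lra | apply: ltW].
have hCa : (C + a) ^+ (k - 1) = expR ((k - 1)%:R * L).
  by rewrite expRM_natl lnK // posrE.
have hnk : n%:R ^+ k = n%:R ^+ (k - 1) * n%:R :> R by rewrite -exprSr subn1 prednK.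
have nk0 : n%:R ^+ (k - 1) != 0 :> R by rewrite expf_neq0 // gt_eqF.
rewrite expr_div_n hCa -expRM_natr hnk.
have -> : n%:R ^+ (k - 1) * n%:R * expR k%:R *
    (expR ((k - 1)%:R * L) / n%:R ^+ (k - 1) *
     expR (- ((C - a) / n%:R) * (k * (n - k))%:R))
  = n%:R * expR (k%:R + (k - 1)%:R * L - (C - a) / n%:R * (k * (n - k))%:R).
  rewrite !expRD mulNr expRN; field.
  by rewrite nk0 /= gt_eqF // expR_gt0.
have -> : n%:R / C * expR (- ((C - 1 - ln C - C * eps - omega) * k%:R))
   = n%:R * expR (- ln C - (C - 1 - ln C - C * eps - omega) * k%:R).
  by rewrite expRD [expR (- ln C)]expRN lnK ?posrE // mulrA.
rewrite ler_wpM2l ?ler0n // ler_expR.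
rewrite natrB // natrM natrB //.
apply: real_ineq => //.
- by rewrite ler1n.
- by rewrite ler_nat.
- by rewrite ler_ln ?posrE //; lra.
- have aC0 : 0 <= a / C by apply: divr_ge0; lra.
  rewrite /L; have -> : C + a = C * (1 + a / C) by field; rewrite gt_eqF.
  rewrite lnM ?posrE //; last lra.
  rewrite lerD2l; apply: le_ln1Dx; lra.
Qed.

Lemma geom (R : realType) (r lo : R) (m : nat) : 0 < r ->
  (1 - expR (- r)) * \sum_(k < m) (if lo <= k%:R then expR (- (r * k%:R)) else 0)
  <= Num.max 0 (expR (- (r * lo)) - expR (- (r * m%:R))).
Proof.
move=> r0.
have eD : forall x : R, expR (- (r * (x + 1))) = expR (- r) * expR (- (r * x)).
  by move=> x; rewrite -expRD; congr expR; ring.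
have emon : forall x : R, expR (- (r * (x + 1))) <= expR (- (r * x)).
  by move=> x; rewrite ler_expR lerN2 mulrDr mulr1 lerDl ltW.
elim: m => [|m IH]; first by rewrite big_ord0 mulr0 le_max lexx.
rewrite big_ord_recr /= mulrDr -natr1.
case: ifP => hm.
  have hle : expR (- (r * m%:R)) <= expR (- (r * lo)) by rewrite ler_expR lerN2 ler_wpM2l // ltW.
  move: IH; rewrite max_r ?subr_ge0 // => IH.
  rewrite le_max; apply/orP; right.
  rewrite eD; lra.
rewrite mulr0 addr0; apply: (le_trans IH).
rewrite ge_max le_max lexx /= le_max; apply/orP; right.
have := emon m%:R; lra.
Qed.

Unset Implicit Arguments. Set Strict Implicit. Set Printing Implicit Defensive.
Local Open Scope classical_set_scope.
Local Open Scope ring_scope.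
Lemma final_bound (R : realType) (C r M theta n0 : R) :
  0 < C -> 0 < r -> 0 < M * r - 1 - theta -> 1 <= n0 ->
  ln (expR (- r) / (C * (1 - expR (- r)))) / (M * r - 1 - theta) <= ln n0 ->
  n0 / C * (expR (- (r * (M * ln n0 + 1))) / (1 - expR (- r))) <= 1 / (n0 `^ theta).
Proof.
move=> C0 r0 D0 n1 ht.
have n0p : 0 < n0 by lra.
have e1 : expR (- r) < 1 by rewrite expR_lt1; lra.
have e0 : 0 < 1 - expR (- r) by lra.
set K0 := expR (- r) / (C * (1 - expR (- r))).
have K0p : 0 < K0 by apply: divr_gt0; [exact: expR_gt0 | exact: mulr_gt0].
set D := M * r - 1 - theta.
set l := ln n0.
have -> : n0 / C * (expR (- (r * (M * l + 1))) / (1 - expR (- r)))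
   = expR (ln K0 + l - r * M * l).
  have e_lo : expR (- (r * (M * l + 1))) = expR (- r) * expR (- (r * M * l)).
    by rewrite -expRD; congr expR; ring.
  rewrite e_lo.
  have -> : n0 / C * (expR (- r) * expR (- (r * M * l)) / (1 - expR (- r)))
     = K0 * n0 * expR (- (r * M * l)).
    by rewrite /K0; field; rewrite !gt_eqF.
  rewrite -{1}(@lnK _ K0) ?posrE // -{1}(@lnK _ n0) ?posrE // -/l -!expRD.
  congr expR; ring.
rewrite /powR gt_eqF // mul1r -expRN ler_expR.
have : D * (ln K0 / D) <= D * l by apply: ler_wpM2l; [exact: ltW | exact: ht].
rewrite mulrC divfK ?gt_eqF // => h.
move: h; rewrite /l => h. rewrite -subr_ge0.
have -> : - (theta * ln n0) - (ln K0 + ln n0 - r * M * ln n0) = (M * r - 1 - theta) * ln n0 - ln K0 by ring.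
by rewrite subr_ge0.
Qed.

Theorem lemma3 (R : realType) (C : R) (alpha : nat -> R)
    (p : forall n : nat, edge n -> R) (eps omega M theta : R) :
  0 < C ->
  (forall n, 0 <= alpha n) ->
  alpha n @[n --> \oo] --> (0 : R) ->
  (forall n (e : edge n), 0 <= p n e <= 1) ->
  (forall n (e : edge n),
      (C - alpha n) / n%:R <= p n e <= (C + alpha n) / n%:R) ->
  C != 1 ->
  0 < eps < 1 -> 0 < omega ->
  0 < delta C - C * eps - omega ->
  1 / (delta C - C * eps - omega) < M ->
  theta < M * (delta C - C * eps - omega) - 1 ->
  exists N : nat, (0 < N)%N /\
    forall n : nat, (N <= n)%N ->
      Prob (p n) (fun w : config n =>
        [exists i : 'I_n,
           (M * ln n%:R + 1 <= (comp_size w i)%:R) &&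
           ((comp_size w i)%:R <= eps * n%:R)])
      <= 1 / (n%:R `^ theta).
Proof.
move=> C0 a0 acvg hp hpC _ he w0 r0 hM hth.
set r := delta C - C * eps - omega in r0 hM hth *.
have M0 : 0 < M by apply: lt_trans hM; rewrite div1r invr_gt0.
have D0 : 0 < M * r - 1 - theta by lra.
set K0 := expR (- r) / (C * (1 - expR (- r))).
set t := ln K0 / (M * r - 1 - theta).
set eta := Num.min C (omega * C / (1 + C)).
have eta0 : 0 < eta.
  rewrite /eta lt_min C0 /=; apply: divr_gt0; [exact: mulr_gt0 | lra].
have [Na _ HNa] := (iffLR (cvgrPdist_lt _ _) acvg) eta eta0.
exists (maxn Na (maxn (Num.trunc (2 * C)).+1 (Num.trunc (expR t)).+1)).
split; first by rewrite leq_max; apply/orP; right; rewrite leq_max.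
move=> n; rewrite !geq_max => /and3P[hna h2C ht].
set a := alpha n.
have an0 : 0 <= a := a0 n.
have ha : a < eta.
  by have := HNa n hna; rewrite sub0r normrN ger0_norm.
have aC : a <= C by apply: ltW; apply: (lt_le_trans ha); rewrite /eta ge_min lexx.
have haw : a / C + a <= omega.
  have : a <= omega * C / (1 + C).
    by apply: ltW; apply: (lt_le_trans ha); rewrite /eta ge_min lexx orbT.
  rewrite ler_pdivlMr; last lra.
  move=> h.
  have -> : a / C + a = a * (1 + C) / C by field; rewrite gt_eqF.
  by rewrite ler_pdivrMr.
have n2C : 2 * C <= n%:R.
  apply: ltW; apply: (lt_le_trans (truncnS_gt _)); by rewrite ler_nat.
have npos : (0 < n)%N by apply: leq_trans h2C.
have nR1 : 1 <= n%:R :> R by rewrite ler1n.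
have nR0 : 0 < n%:R :> R by lra.
have hln : t <= ln n%:R.
  have : expR t <= n%:R.
    apply: ltW; apply: (lt_le_trans (truncnS_gt _)); by rewrite ler_nat.
  move=> h; rewrite -[X in X <= _](expRK t) ler_ln ?posrE //; exact: expR_gt0.
set q := (C + a) / n%:R.
set pm := (C - a) / n%:R.
have hq : forall e, pm <= p n e <= q := hpC n.
have pm0 : 0 <= pm by apply: divr_ge0; lra.
have q0 : 0 <= q by apply: divr_ge0; lra.
have q1 : q <= 1.
  rewrite ler_pdivrMr // mul1r; lra.
set lo := M * ln n%:R + 1.
have lo1 : 1 <= lo.
  have : 0 <= M * ln n%:R by apply: mulr_ge0; [exact: ltW | exact: ln_ge0].
  rewrite /lo; lra.
set c := fun k : nat => (lo <= k%:R) && (k%:R <= eps * n%:R).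
pose P := fun x : {set 'I_n} * {ffun 'I_n -> 'I_n} =>
  c #|x.1| && fam x.1 x.2 && (#|x.1| - 1 <= #|Tset x.1 x.2|)%N.
pose E := fun (x : {set 'I_n} * {ffun 'I_n -> 'I_n}) (w : config n) =>
  [forall e in Tset x.1 x.2, w e] && [forall e in bnd x.1, ~~ w e].
apply: (le_trans (@prob_union R n (p n) _ P E _ (hp n) _)).
  move=> w /existsP[i hi]; exists (Defs.comp w i, fpar w i).
    have [hf [hT _]] := tree_exists w i.
    by rewrite /P /= /fam hf hT !andbT /c; exact: hi.
  have [_ [_ [hTw hB]]] := tree_exists w i.
  by rewrite /E /=; apply/andP; split; apply/forallP => e; apply/implyP; [exact: hTw | exact: hB].
apply: (@le_trans _ _ (\sum_(x | P x)
    (q ^+ (#|x.1| - 1) * expR (- pm) ^+ (#|x.1| * (n - #|x.1|))))).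
  apply: ler_sum => x /andP[/andP[_ hf] hT]; exact: prob_E.
have F0 : forall k, 0 <= q ^+ (k - 1) * expR (- pm) ^+ (k * (n - k)).
  by move=> k; apply: mulr_ge0; apply: exprn_ge0 => //; exact: expR_ge0.
have hcb := @count_bound R n c (fun x => (#|x.1| - 1 <= #|Tset x.1 x.2|)%N)
   (fun k => q ^+ (k - 1) * expR (- pm) ^+ (k * (n - k))) F0.
apply: (le_trans hcb).
apply: (@le_trans _ _ (\sum_(k < n.+1 | c k) (n%:R / C * expR (- (r * k%:R))))).
  apply: ler_sum => k /andP[hlo hhi].
  have k1 : (1 <= k)%N by rewrite -(ler_nat R); apply: le_trans hlo.
  have kn : (k <= n)%N by rewrite -ltnS.
  exact: (@term_bound R C a eps omega n k C0 an0 aC haw he k1 kn hhi).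
apply: (@le_trans _ _ (n%:R / C * \sum_(k < n.+1) (if lo <= k%:R then expR (- (r * k%:R)) else 0))).
  rewrite mulr_sumr [X in X <= _]big_mkcond /=; apply: ler_sum => k _.
  case: ifP => [/andP[-> _] //|_].
  case: ifP => _; last by rewrite mulr0.
  apply: mulr_ge0; [apply: divr_ge0; lra | exact: expR_ge0].
apply: (le_trans _ (@final_bound R C r M theta n%:R C0 r0 D0 nR1 hln)).
apply: ler_wpM2l; first by apply: divr_ge0; lra.
have e0 : 0 < 1 - expR (- r) by rewrite subr_gt0 expR_lt1; lra.
rewrite ler_pdivlMr // mulrC.
apply: (le_trans (geom _ _ r0)).
rewrite ge_max; apply/andP; split; first exact: expR_ge0.
by rewrite lerBlDr lerDl expR_ge0.
Qed.
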